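(* Let $h(\cdot,\theta)=[h_1(\cdot,\theta),\dots,h_q(\cdot,\theta)]^T:\mathbb{R}^p\to\mathbb{R}^q$ be continuously differentiable in $x$ (for a fixed parameter $\theta$). For each $r\in\{1,\dots,q\}$ let $$b_r:=\sup_{x\in\mathbb{R}^p}\|\nabla_x h_r(x,\theta)\|_2,$$ and assume $0<b_r<\infty$. Fix $0<c<1$ and define $$\mathcal{B}_r:=\{x\in\mathbb{R}^p:\ \|\nabla_x h_r(x,\theta)\|_2>c\cdot b_r\},\qquad r\in\{1,\dots,q\}.$$ Suppose that $\mu\left(\bigcup_{r=1}^q\mathcal{B}_r\right)<C$ for some finite constant $C$, where $\mu$ is Lebesgue measure on $\mathbb{R}^p$. Then for every $\epsilon>0$ there exists a probability distribution $\mathcal{P}$ on $\mathbb{R}^p$ such that $$\sup_{x\in\mathbb{R}^p}\left\|\mathbb{E}_{\eta\sim\mathcal{P}}\,\nabla_x h_r(x+\eta,\theta)\right\|_2<(c+\epsilon)\cdot b_r\qquad\text{for all } r\in\{1,\dots,q\}.$$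
   Context: $h$ represents a single neural network layer with parameters $\theta$; $\nabla_x h_r(x,\theta)\in\mathbb{R}^p$ is the gradient of the $r$-th output coordinate with respect to the input $x$, and $\|\cdot\|_2$ is the Euclidean norm. The expectation is over a random perturbation $\eta$ of the input drawn from $\mathcal{P}$. *)

(* Defs.v *)
From HB Require Import structures.
From mathcomp Require Import all_boot all_order all_algebra.
From mathcomp Require Import all_classical all_reals all_analysis.
Set Implicit Arguments. Unset Strict Implicit. Unset Printing Implicit Defensive.
Import Order.TTheory GRing.Theory Num.Theory.
Import numFieldNormedType.Exports.
Local Open Scope classical_set_scope.
Local Open Scope ring_scope.

Section defs.
Variables (R : realType) (p : nat).

(* Euclidean norm on R^p (MathComp's own matrix norm is the max-norm). *)
Definition enorm (v : 'rV[R]_p) : R := Num.sqrt (\sum_(i < p) v 0 i ^+ 2).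

Definition grad (f : 'rV[R]_p -> R) (x : 'rV[R]_p) : 'rV[R]_p :=
  \row_(i < p) ('d f x) (delta_mx 0 i : 'rV[R]_p).

Definition box (a b : 'rV[R]_p) : set 'rV[R]_p :=
  [set x | forall i, a 0 i <= x 0 i <= b 0 i].

Definition box_vol (a b : 'rV[R]_p) : R :=
  \prod_(i < p) Num.max (b 0 i - a 0 i) 0.

Definition lebesgue_outer (A : set 'rV[R]_p) : \bar R :=
  ereal_inf [set s | exists a b : nat -> 'rV[R]_p,
     A `<=` \bigcup_k box (a k) (b k) /\
     s = (\sum_(k <oo) (box_vol (a k) (b k))%:E)%E].

(* R^p as a measurable space: p.-tuple R with the product (= Borel)
   sigma-algebra provided by MathComp-Analysis. *)
Definition tup2rv (t : p.-tuple R) : 'rV[R]_p := \row_(i < p) tnth t i.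

Definition expect_vec (P : probability (p.-tuple R) R)
    (g : 'rV[R]_p -> 'rV[R]_p) : 'rV[R]_p :=
  \row_(i < p) Rintegral P setT (fun t => g (tup2rv t) 0 i).

End defs.

(* Main.v *)
Require Import Defs.
From HB Require Import structures.
From mathcomp Require Import all_boot all_order all_algebra.
From mathcomp Require Import all_classical all_reals all_analysis.
From mathcomp Require Import measurable_realfun.
From mathcomp Require Import lra ring.
Import Order.TTheory GRing.Theory Num.Theory.
Import numFieldNormedType.Exports.
Local Open Scope classical_set_scope.
Local Open Scope ring_scope.
Set Implicit Arguments. Unset Strict Implicit. Unset Printing Implicit Defensive.

Section tprod.
Variable R : realType.
Variables (w : R) (w0 : 0 < w).

Definition Uf : set R -> \bar R := uniform_prob w0.

Let U0 : Uf set0 = 0%E. Proof. exact: (measure0 (uniform_prob w0)). Qed.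
Let Uge0 A : (0 <= Uf A)%E. Proof. exact: (measure_ge0 (uniform_prob w0)). Qed.
Let Usig : semi_sigma_additive Uf.
Proof. move=> F mF tF mUF. have := @measure_semi_sigma_additive _ _ _ (uniform_prob w0) F mF tF mUF. exact. Qed.
HB.instance Definition _ := isMeasure.Build _ _ _ Uf U0 Uge0 Usig.
Let UT : Uf setT = 1%E. Proof. exact: (probability_setT (uniform_prob w0)). Qed.
HB.instance Definition _ := Measure_isProbability.Build _ _ _ Uf UT.

Definition consf n (x : R * n.-tuple R) : n.+1.-tuple R := [tuple of x.1 :: x.2].

Lemma measurable_consf n : measurable_fun setT (@consf n).
Proof. exact: measurable_cons. Qed.

HB.instance Definition _ n := isMeasurableFun.Build _ _ _ _ (@consf n) (@measurable_consf n).

Fixpoint tprob n : probability (n.-tuple R) R :=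
  match n with
  | 0 => dirac [tuple] : probability _ R
  | n.+1 => distribution (Uf \x tprob n)%E (@consf n)
  end.

Lemma Uf_itv (a b : R) : (Uf `[a, b] <= (Num.max (b - a) 0 / w)%:E)%E.
Proof.
have [ba|ab] := ltP b a.
  by rewrite set_itv_ge ?bnd_simp -?ltNge // measure0 lee_fin divr_ge0 ?le_max ?lexx ?orbT // ltW.
rewrite /Uf /uniform_prob.
apply: (@le_trans _ _ (\int[lebesgue_measure]_(x in `[a, b]) (cst (w^-1)%:E) x)%E).
  apply: ge0_le_integral => //.
  - by move=> x _; rewrite lee_fin uniform_pdf_ge0.
  - by apply/measurable_EFinP/measurable_funTS; exact: measurable_uniform_pdf.
  - move=> x _; rewrite /uniform_pdf lee_fin; case: ifPn => _; rewrite ?subr0 //.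
    by rewrite invr_ge0 ltW.
rewrite integral_cst //.
set m := (X in (_ * X)%E).
have -> : m = (Num.max (b - a) 0)%:E.
  rewrite /m; have E := lebesgue_measure_itv (R:=R) `[a, b].
  move: E => /= ->; rewrite lte_fin.
  have [ab'|] := ltP a b.
    by rewrite max_l // subr_ge0 ltW.
  move=> ba; have -> : b = a by apply/eqP; rewrite eq_le ba ab.
  by rewrite subrr maxxx.
by rewrite -EFinM lee_fin mulrC.
Qed.
Definition tbox n (a b : 'I_n -> R) : set (n.-tuple R) :=
  [set t | forall i, a i <= tnth t i <= b i].

Lemma measurable_tbox n (a b : 'I_n -> R) : measurable (tbox a b).
Proof.
have -> : tbox a b = \bigcap_(i in [set: 'I_n]) ((fun t => tnth t i) @^-1` [set` Interval (BLeft (a i)) (BRight (b i))]).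
  apply/seteqP; split => t /=.
    by move=> h i _ /=; rewrite in_itv /= h.
  by move=> h i; have := h i I; rewrite /= in_itv.
apply: fin_bigcap_measurable; first exact: finite_finset.
move=> i _; rewrite -[X in measurable X]setTI.
exact: measurable_tnth.
Qed.

Lemma tprob_tbox n (a b : 'I_n -> R) :
  (tprob n (tbox a b) <= (\prod_(i < n) (Num.max (b i - a i) 0 / w))%:E)%E.
Proof.
elim: n a b => [|n IH] a b.
  by rewrite big_ord0 probability_le1 //; exact: measurable_tbox.
rewrite big_ord_recl /=.
have -> : (@consf n @^-1` tbox a b) =
    (`[a ord0, b ord0] `*` tbox (a \o lift ord0) (b \o lift ord0)).
  apply/seteqP; split => -[x t] /=.
    move=> h; split; first by have := h ord0; rewrite /consf (tnth_nth x) /= in_itv.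
    by move=> i /=; have := h (lift ord0 i); rewrite /consf tnthS.
  rewrite in_itv /= => -[hx ht] i.
  case: (unliftP ord0 i) => [j ->|->].
    by rewrite /consf tnthS; exact: ht.
  by rewrite /consf (tnth_nth x).
rewrite product_measure1E //; last exact: measurable_tbox.
rewrite EFinM; apply: lee_pmul => //.
- exact: Uf_itv.
- exact: IH.
Qed.
End tprod.

Section meas.
Variable R : realType.
Variable p : nat.

Definition ob (i : p.-tuple rat * rat) : set (p.-tuple R) :=
  [set t | forall k, ball (ratr (tnth i.1 k) : R) (ratr i.2) (tnth t k)].

Lemma measurable_ob i : measurable (ob i).
Proof.
have -> : ob i = \bigcap_(k in [set: 'I_p]) ((fun t => tnth t k) @^-1` ball (ratr (tnth i.1 k) : R) (ratr i.2)).
  apply/seteqP; split => t /=.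
    by move=> h k _ /=; exact: h.
  by move=> h k; exact: (h k I).
apply: fin_bigcap_measurable; first exact: finite_finset.
move=> k _; rewrite -[X in measurable X]setTI.
apply: measurable_tnth => //; exact: measurable_ball.
Qed.

Lemma cont_meas (F : 'rV[R]_p -> R) : continuous F ->
  measurable_fun setT (fun t : p.-tuple R => F (tup2rv t)).
Proof.
move=> cF.
apply: (measurability (@RGenInftyO.G R)).
  exact: (@RGenInftyO.measurableE R).
move=> _ [_ [y ->] <-]; rewrite setTI.
set S := (X in measurable X).
pose Bi (i : p.-tuple rat * rat) := if `[< ob i `<=` S >] then ob i else set0.
have -> : S = \bigcup_i Bi i.
  apply/seteqP; split; last first.
    move=> t [i _]; rewrite /Bi; case: ifPn => [/asboolP h|_] //; exact: h.
  move=> t St.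
  have Fy : F (tup2rv t) < y by move: St; rewrite /S /= in_itv.
  have := cF (tup2rv t); move/cvgrPdist_lt => /(_ (y - F (tup2rv t))).
  rewrite subr_gt0 => /(_ Fy) /nbhs_ballP [d d0 Hd].
  have [rho /andP[rho0 rhod]] : exists rho : rat, (0 < (ratr rho : R)) && ((ratr rho : R) < d / 2).
    have [r] := @rat_in_itvoo R 0 (d / 2) ltac:(by rewrite divr_gt0).
    by rewrite in_itv /= => h; exists r.
  have [cf Hcf] : {cf : 'I_p -> rat & forall k,
      `|(ratr (cf k) : R) - tnth t k| < ratr rho}.
    apply: (@choice _ _ (fun k (q : rat) => `|(ratr q : R) - tnth t k| < ratr rho)) => k.
    have [r] := @rat_in_itvoo R (tnth t k - ratr rho) (tnth t k + ratr rho)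
      ltac:(by rewrite ltrBlDr -addrA ltrDl addr_gt0).
    rewrite in_itv /= => /andP[h1 h2]; exists r.
    by rewrite ltr_distlC; apply/andP; split; lra.
  exists ([tuple cf k | k < p], rho) => //.
  have ob_t : ob ([tuple cf k | k < p], rho) t.
    by move=> k /=; rewrite /ball /= tnth_mktuple; exact: Hcf.
  rewrite /Bi; case: ifPn => // /asboolP; apply: contra_notP => _.
  move=> s obs; rewrite /S /= in_itv /=.
  have : `|F (tup2rv t) - F (tup2rv s)| < y - F (tup2rv t).
    apply: Hd.
    split => // i j; rewrite /tup2rv !mxE.
    have h1 := obs j; rewrite /= tnth_mktuple in h1.
    have h2 : ball (tnth t j) (ratr rho) (ratr (cf j) : R).
      by rewrite /ball /= distrC; exact: Hcf.
    apply: (@le_ball _ _ _ (ratr rho + ratr rho)).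
      by rewrite /= in d0; lra.
    exact: ball_triangle h2 h1.
  rewrite distrC => h; have := ler_norm (F (tup2rv s) - F (tup2rv t)).
  by move: h; lra.
apply: countable_bigcupT_measurable => // i.
by rewrite /Bi; case: ifPn => _ //; exact: measurable_ob.
Qed.
End meas.
Section cs.
Variable R : realType.
Variable n : nat.

Lemma sum_sq0 (u : 'I_n -> R) : \sum_i u i ^+ 2 = 0 -> forall i, u i = 0.
Proof.
move=> h i; apply/eqP; rewrite -sqrf_eq0.
move/eqP: h; rewrite psumr_eq0; last by move=> j _; exact: sqr_ge0.
by move/allP => /(_ i (mem_index_enum _)).
Qed.

Lemma cs (u v : 'I_n -> R) :
  \sum_i u i * v i <= Num.sqrt (\sum_i u i ^+ 2) * Num.sqrt (\sum_i v i ^+ 2).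
Proof.
set a := Num.sqrt _; set b := Num.sqrt _.
have a0 : 0 <= a by exact: sqrtr_ge0.
have b0 : 0 <= b by exact: sqrtr_ge0.
have ea : a ^+ 2 = \sum_i u i ^+ 2 by rewrite sqr_sqrtr // sumr_ge0 // => i _; exact: sqr_ge0.
have eb : b ^+ 2 = \sum_i v i ^+ 2 by rewrite sqr_sqrtr // sumr_ge0 // => i _; exact: sqr_ge0.
have [a00|apos] := eqVneq a 0.
  have := ea; rewrite a00 expr0n /= => /esym /sum_sq0 u0.
  by rewrite big1 ?a00 ?mul0r // => i _; rewrite u0 mul0r.
have [b00|bpos] := eqVneq b 0.
  have := eb; rewrite b00 expr0n /= => /esym /sum_sq0 v0.
  by rewrite big1 ?b00 ?mulr0 // => i _; rewrite v0 mulr0.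
have H : 0 <= \sum_i (b * u i - a * v i) ^+ 2 by apply: sumr_ge0 => i _; exact: sqr_ge0.
have E : \sum_i (b * u i - a * v i) ^+ 2 =
    b ^+ 2 * \sum_i u i ^+ 2 - 2 * a * b * \sum_i (u i * v i) + a ^+ 2 * \sum_i v i ^+ 2.
  rewrite !mulr_sumr -sumrB -big_split /=; apply: eq_bigr => i _; ring.
rewrite E -ea -eb in H.
have ab : 0 < a * b by rewrite mulr_gt0 // lt_def ?apos ?bpos.
set S := \sum_i _ in H *.
have : a * b * S <= a * b * (a * b) by nra.
by rewrite ler_pM2l.
Qed.
End cs.

Section key.
Context d (T : measurableType d) (R : realType) (P : probability T R) (n : nat).

Lemma Rintegral_sum (r : seq 'I_n) (f : 'I_n -> T -> R) :
  (forall i, P.-integrable setT (EFin \o f i)) ->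
  P.-integrable setT (EFin \o (fun x => \sum_(i <- r) f i x)) /\
  Rintegral P setT (fun x => \sum_(i <- r) f i x) = \sum_(i <- r) Rintegral P setT (f i).
Proof.
move=> hf; elim: r => [|j r [IH1 IH2]].
  rewrite big_nil; under eq_Rintegral do rewrite big_nil.
  split.
    by apply: (eq_integrable measurableT _ _ _ (finite_measure_integrable_cst P 0 measurableT)) => x _ /=; rewrite big_nil.
  by rewrite Rintegral_cst // mul0r.
have E : (fun x => \sum_(i <- j :: r) f i x) = (fun x => f j x + \sum_(i <- r) f i x).
  by apply: funext => x; rewrite big_cons.
rewrite E big_cons; split.
  exact: (integrableD measurableT (hf j) IH1).
by rewrite RintegralD // IH2.
Qed.

Lemma key (g : 'I_n -> T -> R) (h : T -> R) :
  (forall i, P.-integrable setT (EFin \o g i)) ->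
  P.-integrable setT (EFin \o h) ->
  (forall t, Num.sqrt (\sum_i g i t ^+ 2) <= h t) ->
  Num.sqrt (\sum_i (Rintegral P setT (g i)) ^+ 2) <= Rintegral P setT h.
Proof.
move=> ig ih gh.
set v := fun i => Rintegral P setT (g i).
set N := Num.sqrt _.
have N0 : 0 <= N by exact: sqrtr_ge0.
have h0 : 0 <= Rintegral P setT h.
  by apply: Rintegral_ge0 => t _; apply: le_trans (gh t); exact: sqrtr_ge0.
have ig' : forall i, P.-integrable setT (EFin \o (fun t => v i * g i t)).
  move=> i; exact: (eq_integrable measurableT _ _ _ (integrableZl measurableT (v i) (ig i))).
have [S1 S2] := Rintegral_sum (index_enum 'I_n) ig'.
have EN : N ^+ 2 = \sum_i v i ^+ 2 by rewrite sqr_sqrtr // sumr_ge0 // => i _; exact: sqr_ge0.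
have : N ^+ 2 <= N * Rintegral P setT h.
  rewrite EN.
  have -> : \sum_i v i ^+ 2 = \sum_i Rintegral P setT (fun t => v i * g i t).
    by apply: eq_bigr => i _; rewrite RintegralZl // expr2.
  rewrite -S2 -RintegralZl //.
  apply: le_Rintegral => //.
    exact: (eq_integrable measurableT _ _ _ (integrableZl measurableT N ih)).
  move=> t _; apply: le_trans (cs v (g ^~ t)) _.
  by rewrite -/N ler_wpM2l.
have [->|Npos] := eqVneq N 0; first by [].
by rewrite expr2 ler_pM2l // lt_def Npos N0.
Qed.
Lemma bdd_int (f : T -> R) (K : R) : measurable_fun setT f ->
  (forall t, `|f t| <= K) -> P.-integrable setT (EFin \o f).
Proof.
move=> mf fK.
apply: (le_integrable measurableT (f := EFin \o f) (g := EFin \o cst K)).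
- exact/measurable_EFinP.
- move=> t _ /=; rewrite lee_fin; apply: le_trans (fK t) _; exact: ler_norm.
- exact: finite_measure_integrable_cst.
Qed.
End key.

Lemma coord_le_enorm (R : realType) (p : nat) (v : 'rV[R]_p) (i : 'I_p) :
  `|v 0 i| <= enorm v.
Proof.
rewrite /enorm -sqrtr_sqr; apply: ler_wsqrtr.
rewrite (bigD1 i) //= lerDl; apply: sumr_ge0 => j _; exact: sqr_ge0.
Qed.

Lemma enorm0 (R : realType) (v : 'rV[R]_0) : enorm v = 0.
Proof. by rewrite /enorm big_ord0 sqrtr0. Qed.

Theorem theorem4p1 (R : realType) (p q : nat) (Theta : Type)
    (h : 'rV[R]_p -> Theta -> 'rV[R]_q) (theta : Theta)
    (hdiff : forall (r : 'I_q) (x : 'rV[R]_p),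
        differentiable (fun y => h y theta 0 r) x)
    (hcont : forall r : 'I_q, continuous (grad (fun y => h y theta 0 r)))
    (b : 'I_q -> \bar R)
    (hb : forall r, b r = ereal_sup
        [set (enorm (grad (fun y => h y theta 0 r) x))%:E | x in [set: 'rV[R]_p]])
    (hbpos : forall r, (0 < b r)%E) (hbfin : forall r, (b r < +oo)%E)
    (c : R) (hc0 : 0 < c) (hc1 : c < 1)
    (B : 'I_q -> set 'rV[R]_p)
    (hB : forall r, B r = [set x | (c%:E * b r <
                     (enorm (grad (fun y => h y theta 0 r) x))%:E)%E])
    (C : R) (hC : (lebesgue_outer (\bigcup_(r in [set: 'I_q]) B r) < C%:E)%E) :
  forall eps : R, 0 < eps ->
  exists P : probability (p.-tuple R) R,
    forall r : 'I_q,
      (ereal_sup [set (enorm (expect_vec P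
           (fun eta => grad (fun y => h y theta 0 r) (x + eta))))%:E
         | x in [set: 'rV[R]_p]] < (c + eps)%:E * b r)%E.
Proof.
move=> eps eps0.
have [s [aa [bb [Hcov ->]] sC]] := ereal_inf_lt hC.
set w := 1 + 2 * `|C| / eps.
have w0 : 0 < w by rewrite /w ltr_wpDr // divr_ge0 // ?mulr_ge0 // ltW.
exists (tprob w0 p) => r.
set G := grad (fun y => h y theta 0 r).
have [bbr Ebr] : exists bbr : R, b r = bbr%:E.
  exists (fine (b r)); rewrite fineK // ge0_fin_numE ?hbfin //; exact: ltW.
have bbr0 : 0 < bbr by rewrite -lte_fin -Ebr.
have Gle : forall y, enorm (G y) <= bbr.
  move=> y0.
  rewrite -lee_fin -Ebr hb; apply: le_ereal_sup_tmp.
  by exists (enorm (G y0))%:E; [exists y0|].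
have p0 : (0 < p)%N.
  case: (posnP p) => // p00; exfalso.
  have e0 : forall v : 'rV[R]_p, enorm v = 0.
    by move=> v; rewrite /enorm big1 ?sqrtr0 // => i; have := ltn_ord i; rewrite {2}p00.
  have := hbpos r; rewrite hb; apply/negP; rewrite -leNgt.
  by apply: ge_ereal_sup => _ [y _ <-]; rewrite e0.
have w1 : 1 <= w by rewrite /w lerDl divr_ge0 // ?mulr_ge0 // ltW.
have wp : w <= w ^+ p.
  have : forall n, (0 < n)%N -> w <= w ^+ n.
    by case => // n _; rewrite exprS ler_peMr ?exprn_ege1 // ltW.
  exact.
rewrite Ebr; apply: (@le_lt_trans _ _ ((c + eps / 2) * bbr)%:E); last first.
  by rewrite -EFinM lte_fin ltr_pM2r // ltrD2l; lra.
apply: ge_ereal_sup => _ [x _ <-]; rewrite lee_fin.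
set P := tprob w0 p.
pose A := \bigcup_k tbox (fun i => aa k 0 i - x 0 i) (fun i => bb k 0 i - x 0 i).
have mA : measurable A by apply: bigcupT_measurable => k; exact: measurable_tbox.
have PAle : (P A <= (w ^+ p)^-1%:E * C%:E)%E.
  apply: le_trans (measure_sigma_subadditive P (fun k => measurable_tbox _ _) mA (@subset_refl _ A)) _.
  apply: (@le_trans _ _ (\sum_(0 <= k <oo) ((w ^+ p)^-1%:E * (box_vol (aa k) (bb k))%:E))%E).
    apply: lee_nneseries => [k _ _|k _]; first exact: measure_ge0.
    apply: le_trans (tprob_tbox w0 _ _) _; rewrite -EFinM lee_fin.
    rewrite /box_vol big_split /= prodr_const card_ord mulrC exprVn.
    rewrite le_eqVlt; apply/orP; left; apply/eqP.
    congr (_ * _); apply: eq_bigr => i _; congr (Num.max _ 0).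
    by rewrite opprB addrA subrK.
  rewrite nneseriesZl; last by move=> k _; rewrite lee_fin /box_vol prodr_ge0 // => i _; rewrite le_max lexx orbT.
  by rewrite lee_wpmul2l // ?lee_fin ?invr_ge0 ?exprn_ge0 ?ltW.
have PA : fine (P A) <= eps / 2.
  have PAfin : P A = (fine (P A))%:E.
    rewrite fineK // ge0_fin_numE ?measure_ge0 //.
    by apply: le_lt_trans (probability_le1 P mA) _; rewrite ltry.
  move: PAle; rewrite PAfin -EFinM lee_fin => PAle.
  apply: le_trans PAle _.
  have wpos : 0 < w ^+ p by rewrite exprn_gt0.
  apply: (@le_trans _ _ (`|C| / w)).
    rewrite mulrC; apply: (@le_trans _ _ (`|C| * (w ^+ p)^-1)).
      by rewrite ler_wpM2r ?real_ler_norm ?num_real // invr_ge0 ltW.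
    by rewrite ler_wpM2l // lef_pV2 // ?posrE.
  set z := `|C| / w.
  have zw : z * w = `|C| by rewrite /z mulfVK // gt_eqF.
  have ew : eps * w = eps + 2 * `|C| by rewrite /w; field; rewrite gt_eqF.
  have Cn : 0 <= `|C| by [].
  nra.
have cG : forall i, continuous (fun y => G (x + y) 0 i).
  move=> i y.
  have h1 : {for y, continuous (fun y => x + y)}.
    have := @cvgD _ _ _ (nbhs y) _ (fun=> x) id x y (cvg_cst x) cvg_id; exact.
  have h2 := continuous_comp h1 (hcont r (x + y)).
  exact: (continuous_comp h2 (@coord_continuous _ _ _ 0 i _)).
have mg : forall i, measurable_fun setT (fun t : p.-tuple R => G (x + tup2rv t) 0 i).
  by move=> i; exact: (cont_meas (cG i)).
have ig : forall i, P.-integrable setT (EFin \o (fun t : p.-tuple R => G (x + tup2rv t) 0 i)).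
  move=> i; apply: (@bdd_int _ _ _ P _ bbr) => // t.
  by apply: le_trans (coord_le_enorm _ _) (Gle _).
have ih : P.-integrable setT (EFin \o (fun t => c * bbr + bbr * \1_A t)).
  apply: (@bdd_int _ _ _ P _ (c * bbr + bbr)).
    apply: measurable_funD => //.
    have := measurable_funM (measurable_cst bbr) (@measurable_indic _ _ R setT A mA) => H. exact H.
  move=> t; have : (0 <= (\1_A t : R) <= 1).
    by rewrite indicE; case: (t \in A); rewrite /= ?ler01 ?lexx.
  move=> /andP[i0 i1]; rewrite ger0_norm; nra.
have pw : forall t, Num.sqrt (\sum_i G (x + tup2rv t) 0 i ^+ 2) <= c * bbr + bbr * \1_A t.
  move=> t; have -> : Num.sqrt (\sum_i G (x + tup2rv t) 0 i ^+ 2) = enorm (G (x + tup2rv t)) by [].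
  case: (boolP (t \in A)) => tA.
    rewrite indicE tA /= mulr1; apply: le_trans (Gle _) _.
    by rewrite lerDr mulr_ge0 // ltW.
  rewrite indicE (negbTE tA) mulr0 addr0.
  have nB : ~ B r (x + tup2rv t).
    move=> Bx; have [k _ boxk] : (\bigcup_k box (aa k) (bb k)) (x + tup2rv t).
      by apply: Hcov; exists r.
    move/negP: tA; apply; rewrite inE; exists k => // i.
    have := boxk i; rewrite !mxE => /andP[h1 h2].
    by apply/andP; split; lra.
  rewrite hB /= Ebr in nB.
  rewrite leNgt; apply/negP => H; apply: nB; by rewrite -EFinM lte_fin.
have := key ig ih pw.
have iI : P.-integrable setT (EFin \o (fun t => bbr * \1_A t)).
  apply: (@bdd_int _ _ _ P _ bbr).
    have := measurable_funM (measurable_cst bbr) (@measurable_indic _ _ R setT A mA) => H. exact H.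
  move=> t; have : (0 <= (\1_A t : R) <= 1).
    by rewrite indicE; case: (t \in A); rewrite /= ?ler01 ?lexx.
  move=> /andP[i0 i1]; rewrite ger0_norm; nra.
rewrite RintegralD //; last exact: finite_measure_integrable_cst.
rewrite Rintegral_cst // [fine _](_ : _ = 1); last exact: (f_equal fine (probability_setT P)).
rewrite /= mulr1.
have -> : Rintegral P setT (fun t => bbr * \1_A t) = bbr * fine (P A).
  rewrite RintegralZl //; last exact: integrable_indic.
  by rewrite /Rintegral integral_indic // setIT.
have -> : enorm (expect_vec P (fun eta : 'rV_p => G (x + eta))) =
   Num.sqrt (\sum_i (Rintegral P setT (fun t => G (x + tup2rv t) 0 i)) ^+ 2).
  by rewrite /enorm /expect_vec; congr Num.sqrt; apply: eq_bigr => i _; rewrite mxE.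
move=> H; apply: le_trans H _.
nra.
Qed.
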